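(* For all $x$ with $|x|<1/4$, \[ \sum_{n=0}^\infty\binom{2n}{n}H_{2n+1}x^n=\frac1{\sqrt{1-4x}}\ln\Bigl(\frac{1+\sqrt{1-4x}}{2(1-4x)}\Bigr)+\frac{\arcsin(2\sqrt x)}{2\sqrt x}, \] \[ \sum_{n=0}^\infty(-1)^n\binom{2n}{n}H_{2n+1}x^n=\frac1{\sqrt{1+4x}}\ln\Bigl(\frac{1+\sqrt{1+4x}}{2(1+4x)}\Bigr)+\frac{\ln\bigl(2\sqrt x+\sqrt{1+4x}\bigr)}{2\sqrt x}. \]
   Context: $H_n=\sum_{j=1}^n\frac1j$ is the $n$th harmonic number. The functions $\frac{\arcsin(2\sqrt x)}{2\sqrt x}=\sum_{n\ge0}\binom{2n}{n}\frac{x^n}{2n+1}$ and $\frac{\ln(2\sqrt x+\sqrt{1+4x})}{2\sqrt x}=\sum_{n\ge0}(-1)^n\binom{2n}{n}\frac{x^n}{2n+1}$ are understood as these even analytic functions of $\sqrt x$ (principal branches for $x<0$, value $1$ at $x=0$). *)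

(* Defs.v *)
From Stdlib Require Import Reals.
From Coquelicot Require Import Coquelicot.
Open Scope R_scope.

Fixpoint harmonic (n : nat) : R :=
  match n with
  | O => 0
  | S m => harmonic m + / INR (S m)
  end.

Definition cbin (n : nat) : R := Binomial.C (2 * n) n.

(* arcsin(2 sqrt x)/(2 sqrt x), as an even analytic function of sqrt x:
   x > 0 : asin(2 sqrt x)/(2 sqrt x);  x = 0 : 1;
   x < 0 : principal branch, sqrt x = i s with s = sqrt(-x):
           asin(2 i s)/(2 i s) = asinh(2 s)/(2 s) = ln(2 s + sqrt(1+4s^2))/(2 s). *)
Definition asin_ratio (x : R) : R :=
  if Rlt_dec 0 x then asin (2 * sqrt x) / (2 * sqrt x)
  else if Rlt_dec x 0 then
    ln (2 * sqrt (- x) + sqrt (1 - 4 * x)) / (2 * sqrt (- x))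
  else 1.

(* ln(2 sqrt x + sqrt(1+4x))/(2 sqrt x), as an even analytic function of sqrt x:
   x > 0 : as written;  x = 0 : 1;
   x < 0 : sqrt x = i s, ln(2 i s + sqrt(1-4s^2))/(2 i s) = asin(2 s)/(2 s). *)
Definition asinh_ratio (x : R) : R :=
  if Rlt_dec 0 x then ln (2 * sqrt x + sqrt (1 + 4 * x)) / (2 * sqrt x)
  else if Rlt_dec x 0 then asin (2 * sqrt (- x)) / (2 * sqrt (- x))
  else 1.

(* Main.v *)
Require Import Defs.
From Stdlib Require Import Reals Lra Lia Factorial.
From Coquelicot Require Import Coquelicot.
Open Scope R_scope.

Lemma cbin_eq n : cbin n = INR (Factorial.fact (2*n)) / (INR (Factorial.fact n) * INR (Factorial.fact n)).
Proof. unfold cbin, Binomial.C. replace (2*n-n)%nat with n by lia. reflexivity. Qed.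

Lemma cbin_S n : cbin (S n) * INR (S n) = 2 * (2 * INR n + 1) * cbin n.
Proof.
  rewrite !cbin_eq. replace (2 * S n)%nat with (S (S (2*n))) by lia.
  rewrite !fact_simpl, !mult_INR. rewrite !S_INR, mult_INR. simpl (INR 2).
  pose proof (INR_fact_neq_0 n). pose proof (INR_fact_neq_0 (2*n)).
  pose proof (pos_INR n).
  field. lra.
Qed.

Lemma cbin_pos n : 0 < cbin n.
Proof. rewrite cbin_eq. pose proof (INR_fact_lt_0 n). pose proof (INR_fact_lt_0 (2*n)).
  apply Rdiv_lt_0_compat; nra. Qed.

Lemma cbin_S' n : cbin (S n) = 2 * (2 * INR n + 1) / INR (S n) * cbin n.
Proof. pose proof (cbin_S n). pose proof (pos_INR n).
  assert (INR (S n) <> 0) by (rewrite S_INR; lra).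
  apply Rmult_eq_reg_r with (INR (S n)); auto. rewrite H. field. auto. Qed.

Lemma cbin_le n : cbin n <= 4 ^ n.
Proof.
  induction n. { rewrite cbin_eq. simpl. lra. }
  rewrite cbin_S'. simpl (4 ^ S n). pose proof (cbin_pos n). pose proof (pos_INR n).
  rewrite S_INR. apply Rle_trans with (4 * cbin n); [|lra].
  apply Rmult_le_compat_r; [lra|]. apply Rmult_le_reg_r with (INR n + 1); [lra|].
  field_simplify; lra.
Qed.

Lemma cbin_0 : cbin 0 = 1.
Proof. rewrite cbin_eq. simpl. lra. Qed.
Lemma cbin_1 : cbin 1 = 2.
Proof. rewrite cbin_eq. simpl. lra. Qed.

Lemma harm_bounds n : 0 <= harmonic n <= INR n.
Proof.
  induction n. { simpl; lra. } change (harmonic (S n)) with (harmonic n + / INR (S n)).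
  pose proof (pos_INR n).
  assert (0 < / INR (S n) <= 1).
  { rewrite S_INR. split. apply Rinv_0_lt_compat; lra.
    rewrite <- Rinv_1. apply Rinv_le_contravar; lra. }
  rewrite S_INR in *; lra.
Qed.

Lemma rad (c : nat -> R) K :
  (forall n, Rabs (c n) <= K * ((INR n + 1) * 4 ^ n)) ->
  forall x, Rabs x < / 4 -> Rbar_lt (Rabs x) (CV_radius c).
Proof.
  intros Hc x Hx.
  set (g := fun n : nat => 4 ^ n).
  assert (Hg : CV_radius g = Finite (/ 4)).
  { apply CV_radius_finite_DAlembert with (l := 4).
    - intros n. unfold g. apply pow_nonzero. lra.
    - lra.
    - apply is_lim_seq_ext with (fun _ => 4). intros n. unfold g. simpl.
      replace (4 * 4 ^ n / 4 ^ n) with 4. rewrite Rabs_pos_eq; lra.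
      field. apply pow_nonzero; lra.
      apply is_lim_seq_const. }
  set (r := (Rabs x + /4) / 2).
  pose proof (Rabs_pos x).
  assert (Hr : 0 < r < /4) by (unfold r; lra).
  assert (Hd : ex_series (fun n => Rabs (PS_derive g n * r ^ n))).
  { apply CV_disk_inside. rewrite CV_radius_derive, Hg. simpl.
    rewrite Rabs_pos_eq; lra. }
  assert (Hcd : ex_series (fun n => Rabs (c n * r ^ n))).
  { apply (@ex_series_le R_AbsRing R_CompleteNormedModule) with (fun n => Rabs K / 4 * Rabs (PS_derive g n * r ^ n)).
    - intros n. change (norm (Rabs (c n * r ^ n))) with (Rabs (Rabs (c n * r ^ n))).
      rewrite Rabs_Rabsolu. unfold PS_derive, g.
      rewrite !Rabs_mult. rewrite (Rabs_pos_eq (INR (S n))) by apply pos_INR.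
      rewrite (Rabs_pos_eq (4 ^ S n)) by (apply pow_le; lra).
      rewrite S_INR. simpl (4 ^ S n).
      pose proof (Rabs_pos (r ^ n)).
      specialize (Hc n).
      apply Rle_trans with (K * ((INR n + 1) * 4 ^ n) * Rabs (r ^ n)).
      apply Rmult_le_compat_r; auto.
      pose proof (Rle_abs K). pose proof (pos_INR n). pose proof (pow_le 4 n ltac:(lra)).
      assert (0 <= (INR n + 1) * 4 ^ n * Rabs (r ^ n)) by (apply Rmult_le_pos; [apply Rmult_le_pos|]; lra).
      nra.
    - apply (ex_series_scal_l (Rabs K / 4)) in Hd. exact Hd. }
  assert (Hlim : is_lim_seq (fun n => c n * r ^ n) 0).
  { apply is_lim_seq_abs_0. apply ex_series_lim_0. exact Hcd. }
  pose proof (CV_radius_ge_0 c) as H0.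
  destruct (CV_radius c) as [R0| |] eqn:E; simpl in *; auto.
  destruct (Rlt_dec (Rabs x) R0) as [h|h]; auto.
  apply Rnot_lt_le in h. exfalso. apply (CV_disk_outside c r). rewrite E. simpl. rewrite Rabs_pos_eq; unfold r in *; lra.
  exact Hlim.
Qed.

Lemma x_deriv (c : nat -> R) y :
  y * PSeries (PS_derive c) y = PSeries (fun n => INR n * c n) y.
Proof.
  rewrite <- PSeries_incr_1. apply PSeries_ext. intros [|n]; simpl.
  - unfold zero; simpl; ring.
  - unfold PS_derive. reflexivity.
Qed.

Lemma ode_series (c e : nat -> R) y :
  Rbar_lt (Rabs y) (CV_radius c) ->
  (forall n, INR (S n) * c (S n) - (4 * INR n + 2) * c n = e n) ->
  (1 - 4 * y) * PSeries (PS_derive c) y - 2 * PSeries c y = PSeries e y.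
Proof.
  intros Hr He.
  assert (E1 : ex_pseries (PS_derive c) y) by (apply ex_pseries_derive; auto).
  assert (E2 : ex_pseries c y) by (apply CV_radius_inside; auto).
  assert (E3 : ex_pseries (fun n => INR n * c n) y).
  { apply ex_pseries_ext with (PS_incr_1 (PS_derive c)).
    intros [|n]; simpl; [unfold zero; simpl; ring| reflexivity].
    apply ex_pseries_incr_1; auto. }
  replace ((1 - 4 * y) * PSeries (PS_derive c) y - 2 * PSeries c y)
    with (PSeries (PS_derive c) y - 4 * (y * PSeries (PS_derive c) y) - 2 * PSeries c y) by ring.
  rewrite x_deriv.
  rewrite <- (PSeries_scal 4), <- (PSeries_scal 2).
  rewrite <- PSeries_minus; auto.
  rewrite <- PSeries_minus; auto.
  - apply PSeries_ext. intros n. rewrite <- He.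
    unfold PS_minus, PS_scal, PS_derive, plus, opp, scal; simpl. unfold mult; simpl. ring.
  - apply ex_pseries_minus; auto. apply ex_pseries_scal; auto. apply Rmult_comm.
  - apply ex_pseries_scal; auto. apply Rmult_comm.
  - apply ex_pseries_scal; auto. apply Rmult_comm.
Qed.

Lemma const_mvt (f : R -> R) a b :
  (forall x, Rmin a b < x < Rmax a b -> is_derive f x 0) ->
  (forall x, Rmin a b <= x <= Rmax a b -> continuity_pt f x) ->
  f b = f a.
Proof.
  intros Hd Hc. destruct (MVT_gen f a b (fun _ => 0) Hd Hc) as [c [_ Hc']].
  lra.
Qed.

Lemma const_deriv (f : R -> R) r :
  (forall y, Rabs y < r -> is_derive f y 0) -> forall y, Rabs y < r -> f y = f 0.
Proof.
  intros Hd y Hy. apply const_mvt.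
  - intros x Hx. apply Hd. unfold Rmin, Rmax in Hx.
    destruct (Rle_dec 0 y); unfold Rabs in *; destruct (Rcase_abs x); destruct (Rcase_abs y); lra.
  - intros x Hx. apply continuity_pt_filterlim. apply (ex_derive_continuous f).
    exists 0. apply Hd. unfold Rmin, Rmax in Hx.
    destruct (Rle_dec 0 y); unfold Rabs in *; destruct (Rcase_abs x); destruct (Rcase_abs y); lra.
Qed.

Lemma rad_cbin y : Rabs y < / 4 -> Rbar_lt (Rabs y) (CV_radius cbin).
Proof.
  apply rad with 1. intros n. rewrite Rabs_pos_eq by (left; apply cbin_pos).
  pose proof (cbin_le n). pose proof (pos_INR n). pose proof (pow_le 4 n ltac:(lra)). nra.
Qed.

Lemma A_val y : Rabs y < / 4 -> PSeries cbin y = / sqrt (1 - 4 * y).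
Proof.
  intros Hy.
  assert (Hs : forall t, Rabs t < /4 -> 0 < 1 - 4 * t).
  { intros t Ht. unfold Rabs in Ht; destruct (Rcase_abs t); lra. }
  set (h := fun t => PSeries cbin t * sqrt (1 - 4 * t)).
  assert (Hd : forall t, Rabs t < /4 -> is_derive h t 0).
  { intros t Ht. pose proof (Hs t Ht) as Hst.
    pose proof (is_derive_PSeries cbin t (rad_cbin t Ht)) as HP.
    unfold h. auto_derive.
    - split. exists (PSeries (PS_derive cbin) t). exact HP. split; auto.
    - replace (Derive (fun x => PSeries cbin x) t) with (PSeries (PS_derive cbin) t)
        by (symmetry; apply is_derive_unique; exact HP).
      replace (1 + - (4*t)) with (1 - 4*t) by ring.
      pose proof (ode_series cbin (fun _ => 0) t (rad_cbin t Ht)) as E.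
      rewrite PSeries_const_0 in E.
      assert (Hq : 0 < sqrt (1 - 4 * t)) by (apply sqrt_lt_R0; lra).
      pose proof (sqrt_sqrt (1 - 4 * t) ltac:(lra)) as Hss.
      apply Rmult_eq_reg_r with (sqrt (1 - 4 * t)); [|lra].
      rewrite Rmult_0_l. rewrite <- E.
      2:{ intros n. rewrite Rmult_comm, cbin_S. ring. }
      field_simplify; [|lra]. rewrite <- Rsqr_pow2. unfold Rsqr. rewrite Hss. field. }
  pose proof (const_deriv h (/4) Hd y Hy) as Hc. unfold h in Hc.
  rewrite PSeries_0, cbin_0 in Hc. replace (1 - 4 * 0) with 1 in Hc by ring.
  rewrite sqrt_1 in Hc.
  assert (Hq : 0 < sqrt (1 - 4 * y)) by (apply sqrt_lt_R0; apply Hs; auto).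
  apply Rmult_eq_reg_r with (sqrt (1 - 4 * y)); [|lra]. rewrite Hc. field. lra.
Qed.

Definition bs (n : nat) : R := cbin n / INR (2 * n + 1).

Lemma rad_b y : Rabs y < / 4 -> Rbar_lt (Rabs y) (CV_radius bs).
Proof.
  apply rad with 1. intros n. unfold bs.
  assert (1 <= INR (2 * n + 1)) by (rewrite <- INR_1; apply le_INR; lia).
  pose proof (cbin_pos n).
  rewrite Rabs_pos_eq.
  2: { apply Rdiv_le_0_compat; lra. }
  pose proof (cbin_le n). pose proof (pos_INR n). pose proof (pow_le 4 n ltac:(lra)).
  apply Rle_trans with (cbin n).
  { unfold Rdiv. rewrite <- (Rmult_1_r (cbin n)) at 2. apply Rmult_le_compat_l; [lra|].
    rewrite <- Rinv_1. apply Rinv_le_contravar; lra. }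
  nra.
Qed.

Lemma ex_x_deriv c y : Rbar_lt (Rabs y) (CV_radius c) -> ex_pseries (fun n => INR n * c n) y.
Proof.
  intros Hr. apply ex_pseries_ext with (PS_incr_1 (PS_derive c)).
  intros [|n]; simpl; [unfold zero; simpl; ring| reflexivity].
  apply ex_pseries_incr_1. apply ex_pseries_derive; auto.
Qed.

Lemma B_rel t : Rabs t < / 4 ->
  PSeries bs t + 2 * (t * PSeries (PS_derive bs) t) = / sqrt (1 - 4 * t).
Proof.
  intros Ht. rewrite x_deriv, <- A_val by auto.
  rewrite <- (PSeries_scal 2). rewrite <- PSeries_plus.
  - apply PSeries_ext. intros n.
    assert (E : INR (2 * n + 1) = 2 * INR n + 1) by (rewrite plus_INR, mult_INR; simpl; ring).
    pose proof (pos_INR n).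
    unfold PS_plus, PS_scal, bs. rewrite E. unfold plus, scal; simpl; unfold mult; simpl.
    field. lra.
  - apply CV_radius_inside, rad_b; auto.
  - apply ex_pseries_scal. apply Rmult_comm. apply ex_x_deriv, rad_b; auto.
Qed.

Lemma cont_PS c t : Rbar_lt (Rabs t) (CV_radius c) -> continuous (PSeries c) t.
Proof. intros H. apply (@ex_derive_continuous R_AbsRing R_NormedModule). eexists. apply is_derive_PSeries; auto. Qed.

Lemma cont_sqrt t : 0 <= t -> continuous sqrt t.
Proof. intros H. apply continuity_pt_filterlim. apply continuity_pt_sqrt; auto. Qed.

Lemma B_pos x : 0 < x < / 4 -> PSeries bs x = asin (2 * sqrt x) / (2 * sqrt x).
Proof.
  intros Hx.
  set (u := fun t => 2 * sqrt t * PSeries bs t - asin (2 * sqrt t)).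
  assert (Hsm : forall t, 0 <= t < /4 -> 0 <= 2 * sqrt t < 1).
  { intros t Ht. pose proof (sqrt_pos t). pose proof (sqrt_sqrt t ltac:(lra)). nra. }
  assert (Hu : u x = u 0).
  { apply const_mvt; rewrite Rmin_left, Rmax_right by lra.
    - intros t Ht. assert (Hta : Rabs t < /4) by (rewrite Rabs_pos_eq; lra).
      pose proof (is_derive_PSeries bs t (rad_b t Hta)) as HP.
      destruct (Hsm t ltac:(lra)) as [Hs1 Hs2].
      assert (Hr : -1 < 2 * sqrt t < 1) by lra.
      unfold u. auto_derive.
      + repeat split; try lra. exists (PSeries (PS_derive bs) t). exact HP.
        apply ex_derive_Reals_1. apply derivable_pt_asin; auto.
      + replace (Derive (fun x => PSeries bs x) t) with (PSeries (PS_derive bs) t)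
          by (symmetry; apply is_derive_unique; exact HP).
        replace (Derive (fun x => asin x) (2 * sqrt t)) with (1 / sqrt (1 - (2 * sqrt t)²))
          by (rewrite <- (derive_pt_asin _ Hr), Derive_Reals; reflexivity).
        pose proof (B_rel t Hta) as Hrel.
        assert (Hq : 0 < sqrt t) by (apply sqrt_lt_R0; lra).
        pose proof (sqrt_sqrt t ltac:(lra)) as Hqq.
        replace ((2 * sqrt t)²) with (4 * t) by (unfold Rsqr; nra).
        assert (Hs : 0 < sqrt (1 - 4 * t)) by (apply sqrt_lt_R0; lra).
        assert (HB' : PSeries (PS_derive bs) t = (/ sqrt (1 - 4 * t) - PSeries bs t) / (2 * t)).
        { rewrite <- Hrel. field. lra. }
        rewrite HB'. set (s := sqrt (1 - 4 * t)) in *. set (B := PSeries bs t).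
        set (q := sqrt t) in *. rewrite <- Hqq. field. split; lra.
    - intros t Ht. apply continuity_pt_filterlim. unfold u.
      assert (Hta : Rabs t < /4) by (rewrite Rabs_pos_eq; lra).
      destruct (Hsm t ltac:(lra)) as [Hs1 Hs2].
      apply (continuous_minus (fun t => 2 * sqrt t * PSeries bs t) (fun t => asin (2 * sqrt t))).
      + apply (continuous_mult (fun t => 2 * sqrt t) (PSeries bs)).
        * apply (continuous_mult (fun _ => 2) sqrt). apply continuous_const. apply cont_sqrt; lra.
        * apply cont_PS, rad_b; auto.
      + apply (continuous_comp (fun t => 2 * sqrt t) asin).
        * apply (continuous_mult (fun _ => 2) sqrt). apply continuous_const. apply cont_sqrt; lra.
        * apply continuity_pt_filterlim. apply derivable_continuous_pt, derivable_pt_asin. lra. }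
  unfold u in Hu. rewrite sqrt_0, Rmult_0_r, asin_0 in Hu.
  assert (Hq : 0 < sqrt x) by (apply sqrt_lt_R0; lra).
  field_simplify_eq; [|lra]. lra.
Qed.

Lemma B_neg x : - / 4 < x < 0 ->
  PSeries bs x = ln (2 * sqrt (- x) + sqrt (1 - 4 * x)) / (2 * sqrt (- x)).
Proof.
  intros Hx.
  set (u := fun t => 2 * sqrt (- t) * PSeries bs t - ln (2 * sqrt (- t) + sqrt (1 - 4 * t))).
  assert (Hpos : forall t, x <= t <= 0 -> 0 < 2 * sqrt (- t) + sqrt (1 - 4 * t)).
  { intros t Ht. pose proof (sqrt_pos (- t)). assert (0 < sqrt (1 - 4 * t)) by (apply sqrt_lt_R0; lra). lra. }
  assert (Hu : u x = u 0).
  { apply const_mvt; rewrite Rmin_right, Rmax_left by lra.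
    - intros t Ht. assert (Hta : Rabs t < /4) by (rewrite Rabs_left; lra).
      pose proof (is_derive_PSeries bs t (rad_b t Hta)) as HP.
      pose proof (Hpos t ltac:(lra)) as Hp.
      unfold u. auto_derive.
      + replace (1 + - (4 * t)) with (1 - 4 * t) by ring. repeat split; try lra. exists (PSeries (PS_derive bs) t). exact HP.
      + replace (Derive (fun x => PSeries bs x) t) with (PSeries (PS_derive bs) t)
          by (symmetry; apply is_derive_unique; exact HP).
        pose proof (B_rel t Hta) as Hrel.
        assert (Hq : 0 < sqrt (- t)) by (apply sqrt_lt_R0; lra).
        pose proof (sqrt_sqrt (- t) ltac:(lra)) as Hqq.
        assert (Hs : 0 < sqrt (1 - 4 * t)) by (apply sqrt_lt_R0; lra).
        assert (HB' : PSeries (PS_derive bs) t = (/ sqrt (1 - 4 * t) - PSeries bs t) / (2 * t)).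
        { rewrite <- Hrel. field. lra. }
        rewrite HB'. replace (1 + - (4 * t)) with (1 - 4 * t) by ring.
        set (s := sqrt (1 - 4 * t)) in *. set (B := PSeries bs t).
        set (q := sqrt (- t)) in *. assert (Ht' : t = - (q * q)) by lra. rewrite Ht'.
        field. repeat split; intro; lra.
    - intros t Ht. apply continuity_pt_filterlim. unfold u.
      assert (Hta : Rabs t < /4) by (unfold Rabs; destruct (Rcase_abs t); lra).
      pose proof (Hpos t Ht) as Hp.
      assert (Hsq : continuous (fun t => sqrt (- t)) t).
      { apply (continuous_comp (fun t => - t) sqrt).
        apply (@ex_derive_continuous R_AbsRing R_NormedModule). auto_derive; auto. apply cont_sqrt; lra. }
      assert (Hsq2 : continuous (fun t => sqrt (1 - 4 * t)) t).
      { apply (continuous_comp (fun t => 1 - 4 * t) sqrt).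
        apply (@ex_derive_continuous R_AbsRing R_NormedModule). auto_derive; auto.
        apply cont_sqrt; lra. }
      apply (continuous_minus (fun t => 2 * sqrt (- t) * PSeries bs t)
               (fun t => ln (2 * sqrt (- t) + sqrt (1 - 4 * t)))).
      + apply (continuous_mult (fun t => 2 * sqrt (- t)) (PSeries bs)).
        * apply (continuous_mult (fun _ => 2) (fun t => sqrt (- t))). apply continuous_const. auto.
        * apply cont_PS, rad_b; auto.
      + apply (continuous_comp (fun t => 2 * sqrt (- t) + sqrt (1 - 4 * t)) ln).
        * apply (continuous_plus (fun t => 2 * sqrt (- t)) (fun t => sqrt (1 - 4 * t))); auto.
          apply (continuous_mult (fun _ => 2) (fun t => sqrt (- t))). apply continuous_const. auto.
        * apply (@ex_derive_continuous R_AbsRing R_NormedModule). eexists. apply is_derive_ln; auto. }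
  unfold u in Hu. rewrite Ropp_0, sqrt_0, Rmult_0_r, Rmult_0_l, Rplus_0_l in Hu.
  replace (1 - 4 * 0) with 1 in Hu by ring. rewrite sqrt_1, ln_1 in Hu.
  assert (Hq : 0 < sqrt (- x)) by (apply sqrt_lt_R0; lra).
  field_simplify_eq; [|lra]. lra.
Qed.

Lemma B_all x : Rabs x < / 4 -> PSeries bs x = asin_ratio x.
Proof.
  intros Hx. unfold asin_ratio.
  destruct (Rlt_dec 0 x).
  - apply B_pos. rewrite Rabs_pos_eq in Hx; lra.
  - destruct (Rlt_dec x 0).
    + apply B_neg. rewrite Rabs_left in Hx; lra.
    + replace x with 0 by lra. rewrite PSeries_0. unfold bs. rewrite cbin_0. simpl. field.
Qed.

Definition qs (n : nat) : R := cbin (S n) / 2.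
Definition ds (n : nat) : R := cbin n * harmonic (2 * n).
Definition es (n : nat) : R := 2 * cbin n + qs n.

Lemma rad_q y : Rabs y < / 4 -> Rbar_lt (Rabs y) (CV_radius qs).
Proof.
  apply rad with 2. intros n. unfold qs.
  pose proof (cbin_pos (S n)). pose proof (cbin_le (S n)).
  rewrite Rabs_pos_eq by lra. simpl (4 ^ S n) in *.
  pose proof (pos_INR n). pose proof (pow_le 4 n ltac:(lra)). nra.
Qed.

Lemma rad_d y : Rabs y < / 4 -> Rbar_lt (Rabs y) (CV_radius ds).
Proof.
  apply rad with 2. intros n. unfold ds.
  pose proof (cbin_pos n). pose proof (cbin_le n). pose proof (harm_bounds (2 * n)).
  rewrite mult_INR in H1. simpl (INR 2) in H1.
  rewrite Rabs_pos_eq by nra.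
  pose proof (pos_INR n). pose proof (pow_le 4 n ltac:(lra)). nra.
Qed.

Lemma harmonic_S m : harmonic (S m) = harmonic m + / INR (S m).
Proof. reflexivity. Qed.

Lemma d_rec n : INR (S n) * ds (S n) - (4 * INR n + 2) * ds n = es n.
Proof.
  unfold ds, es, qs. replace (2 * S n)%nat with (S (S (2 * n))) by lia.
  rewrite !harmonic_S.
  pose proof (pos_INR n). pose proof (cbin_S n). rewrite S_INR in H0.
  assert (E : cbin (S n) = 2 * (2 * INR n + 1) * cbin n / (INR n + 1)).
  { rewrite <- H0. field. lra. }
  rewrite E. rewrite !S_INR, mult_INR. simpl (INR 2). field. lra.
Qed.

Lemma Q_val y : Rabs y < / 4 -> PSeries qs y = 2 / ((1 + sqrt (1 - 4 * y)) * sqrt (1 - 4 * y)).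
Proof.
  intros Hy.
  assert (H14 : 0 < 1 - 4 * y) by (unfold Rabs in Hy; destruct (Rcase_abs y); lra).
  assert (Hs : 0 < sqrt (1 - 4 * y)) by (apply sqrt_lt_R0; lra).
  pose proof (sqrt_sqrt (1 - 4 * y) ltac:(lra)) as Hss.
  destruct (Req_dec y 0) as [->|Hy0].
  { rewrite PSeries_0. unfold qs. rewrite cbin_1. replace (1 - 4 * 0) with 1 by ring.
    rewrite sqrt_1. field. }
  pose proof (A_val y Hy) as HA.
  rewrite (PSeries_decr_1 cbin y) in HA by (apply CV_radius_inside, rad_cbin; auto).
  assert (E : PSeries (PS_decr_1 cbin) y = 2 * PSeries qs y).
  { rewrite <- PSeries_scal. apply PSeries_ext. intros n. unfold PS_decr_1, PS_scal, qs, scal; simpl.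
    unfold mult; simpl. field. }
  rewrite E, cbin_0 in HA.
  set (s := sqrt (1 - 4 * y)) in *. set (Q := PSeries qs y) in *.
  assert (Hy' : y = (1 - s * s) / 4) by lra.
  assert (HQ : Q = (/ s - 1) / (2 * y)) by (rewrite <- HA; field; auto).
  rewrite HQ. rewrite Hy'. field. repeat split; try (intro; lra).
Qed.

Lemma D_ode y : Rabs y < / 4 ->
  (1 - 4 * y) * PSeries (PS_derive ds) y - 2 * PSeries ds y
  = 2 * PSeries cbin y + PSeries qs y.
Proof.
  intros Hy. rewrite (ode_series ds es y (rad_d y Hy) d_rec).
  rewrite <- (PSeries_scal 2), <- PSeries_plus.
  - apply PSeries_ext. intros n. unfold es, PS_plus, PS_scal, plus, scal; simpl; unfold mult; simpl. ring.
  - apply ex_pseries_scal. apply Rmult_comm. apply CV_radius_inside, rad_cbin; auto.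
  - apply CV_radius_inside, rad_q; auto.
Qed.

Lemma D_val y : Rabs y < / 4 ->
  PSeries ds y = / sqrt (1 - 4 * y) * ln ((1 + sqrt (1 - 4 * y)) / (2 * (1 - 4 * y))).
Proof.
  intros Hy.
  assert (H14 : forall t, Rabs t < /4 -> 0 < 1 - 4 * t)
    by (intros t Ht; unfold Rabs in Ht; destruct (Rcase_abs t); lra).
  set (v := fun t => sqrt (1 - 4 * t) * PSeries ds t - ln (1 + sqrt (1 - 4 * t)) + 2 * ln (sqrt (1 - 4 * t))).
  assert (Hd : forall t, Rabs t < /4 -> is_derive v t 0).
  { intros t Ht. pose proof (H14 t Ht) as H1.
    assert (Hs : 0 < sqrt (1 - 4 * t)) by (apply sqrt_lt_R0; lra).
    pose proof (sqrt_sqrt (1 - 4 * t) ltac:(lra)) as Hss.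
    pose proof (is_derive_PSeries ds t (rad_d t Ht)) as HP.
    unfold v. auto_derive.
    - replace (1 + - (4 * t)) with (1 - 4 * t) by ring. repeat split; try lra.
      exists (PSeries (PS_derive ds) t). exact HP.
    - replace (Derive (fun x => PSeries ds x) t) with (PSeries (PS_derive ds) t)
        by (symmetry; apply is_derive_unique; exact HP).
      replace (1 + - (4 * t)) with (1 - 4 * t) by ring.
      pose proof (D_ode t Ht) as Ho. rewrite A_val, Q_val in Ho by auto.
      assert (HD' : PSeries (PS_derive ds) t =
        (2 * / sqrt (1 - 4 * t) + 2 / ((1 + sqrt (1 - 4 * t)) * sqrt (1 - 4 * t)) + 2 * PSeries ds t)
          / (1 - 4 * t)).
      { rewrite <- Ho. field. lra. }
      rewrite HD'.
      set (s := sqrt (1 - 4 * t)) in *. set (D := PSeries ds t). rewrite <- Hss.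
      field. repeat split; intro; lra. }
  pose proof (const_deriv v (/4) Hd y Hy) as Hc. unfold v in Hc.
  rewrite PSeries_0 in Hc. unfold ds at 2 in Hc. simpl (harmonic (2 * 0)) in Hc.
  replace (1 - 4 * 0) with 1 in Hc by ring. rewrite sqrt_1, ln_1 in Hc.
  pose proof (H14 y Hy) as H1.
  assert (Hs : 0 < sqrt (1 - 4 * y)) by (apply sqrt_lt_R0; lra).
  pose proof (sqrt_sqrt (1 - 4 * y) ltac:(lra)) as Hss.
  set (s := sqrt (1 - 4 * y)) in *. set (D := PSeries ds y) in *.
  rewrite <- Hss. rewrite ln_div, ln_mult, ln_mult by nra.
  apply Rmult_eq_reg_l with s; [|lra].
  field_simplify; [|lra]. 
  replace (1 + 1) with 2 in Hc by ring. lra.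
Qed.

Lemma main1 x : Rabs x < / 4 ->
  is_series (fun n : nat => cbin n * harmonic (2 * n + 1) * x ^ n)
    (/ sqrt (1 - 4 * x) * ln ((1 + sqrt (1 - 4 * x)) / (2 * (1 - 4 * x)))
     + asin_ratio x).
Proof.
  intros Hx.
  pose proof (PSeries_correct ds x (CV_radius_inside _ _ (rad_d x Hx))) as HD.
  pose proof (PSeries_correct bs x (CV_radius_inside _ _ (rad_b x Hx))) as HB.
  rewrite <- D_val, <- B_all by auto.
  eapply is_series_ext; [| apply (is_series_plus _ _ _ _ HD HB)].
  intros n. change (pow_n x n * ds n + pow_n x n * bs n = cbin n * harmonic (2 * n + 1) * x ^ n). rewrite pow_n_pow.
  unfold ds, bs. replace (2 * n + 1)%nat with (S (2 * n)) by lia. rewrite harmonic_S.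
  assert (INR (S (2 * n)) <> 0) by (apply not_0_INR; lia).
  field. auto.
Qed.

Lemma asinh_asin x : asinh_ratio x = asin_ratio (- x).
Proof.
  unfold asinh_ratio, asin_ratio.
  destruct (Rlt_dec 0 x); destruct (Rlt_dec 0 (- x)); try lra;
  destruct (Rlt_dec (- x) 0); try lra; destruct (Rlt_dec x 0); try lra.
  all: rewrite ?Ropp_involutive; replace (1 - 4 * - x) with (1 + 4 * x) by ring; reflexivity.
Qed.

Theorem theorem20 (x : R) (hx : Rabs x < / 4) :
  is_series (fun n : nat => cbin n * harmonic (2 * n + 1) * x ^ n)
    (/ sqrt (1 - 4 * x) * ln ((1 + sqrt (1 - 4 * x)) / (2 * (1 - 4 * x)))
     + asin_ratio x)
  /\
  is_series (fun n : nat => (-1) ^ n * cbin n * harmonic (2 * n + 1) * x ^ n)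
    (/ sqrt (1 + 4 * x) * ln ((1 + sqrt (1 + 4 * x)) / (2 * (1 + 4 * x)))
     + asinh_ratio x).
Proof.
  split.
  - apply main1; auto.
  - assert (Hx' : Rabs (- x) < / 4) by (rewrite Rabs_Ropp; auto).
    pose proof (main1 (- x) Hx') as H.
    rewrite asinh_asin. replace (1 + 4 * x) with (1 - 4 * - x) by ring.
    eapply is_series_ext; [| exact H]. intros n. change (@eq R (cbin n * harmonic (2*n+1) * (-x)^n) ((-1)^n * cbin n * harmonic (2*n+1) * x^n)).
    replace (- x) with (-1 * x) by ring. rewrite Rpow_mult_distr. ring.
Qed.
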